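(* If $\mathcal{P}$ and $\mathcal{Q}$ are ranked finite posets, then $\mathcal{M}(\mathcal{P}\times\mathcal{Q},t)=\mathcal{M}(\mathcal{P},t)\,\mathcal{M}(\mathcal{Q},t)$.
   Context: $\mathcal{P}\times\mathcal{Q}$ carries the product order $(x_1,x_2)\le(y_1,y_2)$ iff $x_1\le y_1$ and $x_2\le y_2$, with rank $\mathrm{rk}(x_1,x_2)=\mathrm{rk}(x_1)+\mathrm{rk}(x_2)$. For a finite ranked poset $\mathcal{R}$, $\mathrm{rk}(\mathcal{R})$ is the maximum rank of an element and $\rho(x,y,z)=3\,\mathrm{rk}(\mathcal{R})-\mathrm{rk}(x)-\mathrm{rk}(y)-\mathrm{rk}(z)$. Let $\delta_3(x,y,z)=1$ if $x=y=z$ and $0$ otherwise, and $J=J_\mathcal{R}$ the unique integer-valued function on triples $x\le y\le z$ of $\mathcal{R}$ with $\sum_{x\le a\le y\le b\le z}J(a,y,b)=\delta_3(x,y,z)$ for all $x\le y\le z$. Then $\mathcal{M}(\mathcal{R},t)=\sum_{x\le y\le z}J(x,y,z)\,t^{\rho(x,y,z)}$. *)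

(* Defs.v *)
From Stdlib Require Import ClassicalEpsilon.
From mathcomp Require Import all_boot all_order all_algebra.
Set Implicit Arguments. Unset Strict Implicit. Unset Printing Implicit Defensive.
Import GRing.Theory Num.Theory.
Local Open Scope ring_scope.

Section Defs.
Variables (T : finType) (le : rel T) (rk : T -> nat).

Definition is_poset : Prop :=
  [/\ reflexive le, antisymmetric le & transitive le].

Definition covers (x y : T) : bool :=
  [&& le x y, x != y & [forall z, (le x z && le z y) ==> ((z == x) || (z == y))]].

Definition ranked_poset : Prop :=
  [/\ is_poset,
      (forall x : T, (forall y, le y x -> y = x) -> rk x = 0%N) &
      (forall x y : T, covers x y -> rk y = (rk x).+1)].

Definition rank_of : nat := (\max_(x : T) rk x)%N.

Definition rho (x y z : T) : nat := (3 * rank_of - rk x - rk y - rk z)%N.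

Definition delta3 (x y z : T) : int := if (x == y) && (y == z) then 1 else 0.

Definition is_J (J : T -> T -> T -> int) : Prop :=
  forall x y z : T, le x y -> le y z ->
    \sum_(a : T | le x a && le a y) \sum_(b : T | le y b && le b z) J a y b
    = delta3 x y z.

Definition J_fun : T -> T -> T -> int :=
  epsilon (inhabits (fun _ _ _ => 0)) is_J.

Definition Mpoly : {poly int} :=
  \sum_(x : T) \sum_(y : T) \sum_(z : T | le x y && le y z)
     J_fun x y z *: 'X^(rho x y z).
End Defs.

Definition prod_le (P Q : finType) (leP : rel P) (leQ : rel Q) : rel (P * Q)%type :=
  fun u v => leP u.1 v.1 && leQ u.2 v.2.

Definition prod_rk (P Q : finType) (rkP : P -> nat) (rkQ : Q -> nat) : (P * Q)%type -> nat :=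
  fun u => (rkP u.1 + rkQ u.2)%N.

(* Main.v *)
From Stdlib Require Import ClassicalEpsilon.
Require Import Defs.
From mathcomp Require Import all_boot all_order all_algebra.
From mathcomp Require Import zify ring.
Set Implicit Arguments. Unset Strict Implicit. Unset Printing Implicit Defensive.
Import GRing.Theory Num.Theory.
Local Open Scope ring_scope.

Section Gen.
Variables (T : finType) (R : rel T).
Hypothesis pos : is_poset R.

Definition ivl (a b : T) : nat := #|[pred c | R a c && R c b]|.

Lemma R_refl x : R x x. Proof. by case: pos. Qed.
Lemma R_anti x y : R x y -> R y x -> x = y.
Proof. by case: pos => _ h _ h1 h2; apply: h; rewrite h1 h2. Qed.
Lemma R_trans x y z : R x y -> R y z -> R x z.
Proof. by case: pos => _ _ h h1 h2; apply: h h2. Qed.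

Lemma ivl_left_le x a y : R x a -> (ivl a y <= ivl x y)%N.
Proof.
move=> hxa; apply: subset_leq_card; apply/subsetP => c.
by rewrite !inE => /andP[h1 h2]; rewrite h2 (R_trans hxa h1).
Qed.

Lemma ivl_left_lt x a y : R x a -> R a y -> a != x -> (ivl a y < ivl x y)%N.
Proof.
move=> hxa hay hne; apply: proper_card; apply/properP; split.
  apply/subsetP => c.
  by rewrite !inE => /andP[h1 h2]; rewrite h2 (R_trans hxa h1).
exists x; first by rewrite !inE R_refl (R_trans hxa hay).
rewrite !inE; apply/negP => /andP[h1 _]; move/eqP: hne; apply.
exact: R_anti.
Qed.

Lemma ivl_right_le y b z : R b z -> (ivl y b <= ivl y z)%N.
Proof.
move=> hbz; apply: subset_leq_card; apply/subsetP => c.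
by rewrite !inE => /andP[h1 h2]; rewrite h1 (R_trans h2 hbz).
Qed.

Lemma ivl_right_lt y b z : R y b -> R b z -> b != z -> (ivl y b < ivl y z)%N.
Proof.
move=> hyb hbz hne; apply: proper_card; apply/properP; split.
  apply/subsetP => c.
  by rewrite !inE => /andP[h1 h2]; rewrite h1 (R_trans h2 hbz).
exists z; first by rewrite !inE R_refl (R_trans hyb hbz).
rewrite !inE; apply/negP => /andP[_ h2]; move/eqP: hne; apply.
exact: R_anti.
Qed.

Fixpoint nu (n : nat) (x y : T) : int :=
  if n is n'.+1 then
    (if x == y then 1 else - \sum_(z | (R x z && R z y) && (z != y)) nu n' x z)
  else 0.

Lemma nu_stable x n m y : (ivl x y < n)%N -> (ivl x y < m)%N -> nu n x y = nu m x y.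
Proof.
elim: n m y => [//|n IH] [//|m] y hn hm /=.
case: eqP => // _; congr (- _); apply: eq_bigr => z /andP[/andP[h1 h2] h3].
have := ivl_right_lt h1 h2 h3 => hz.
apply: IH; apply: leq_trans hz _; by rewrite -ltnS.
Qed.

Definition mu x y := nu #|T|.+1 x y.

Lemma mu_sum x y : R x y ->
  \sum_(z | R x z && R z y) mu x z = if x == y then 1 else 0.
Proof.
move=> hxy; rewrite (bigD1 y) /=; last by rewrite hxy R_refl.
case: eqP => [<-|/eqP hne].
  rewrite /mu /= eqxx big1 ?addr0 // => z /andP[/andP[h1 h2] h3].
  by move: h3; rewrite (R_anti h2 h1) eqxx.
have -> : mu x y = - \sum_(z | (R x z && R z y) && (z != y)) nu #|T| x z.
  by rewrite /mu /= (negbTE hne).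
rewrite (eq_bigr (fun z => nu #|T| x z)) ?addNr //.
move=> z /andP[/andP[h1 h2] h3]; apply: nu_stable.
  apply: leq_trans (ivl_right_lt h1 h2 h3) _; rewrite /ivl; exact: leqW (max_card _).
apply: leq_trans (ivl_right_lt h1 h2 h3) _; rewrite /ivl; exact: max_card.
Qed.


Lemma J_unique J1 J2 : is_J R J1 -> is_J R J2 ->
  forall x y z, R x y -> R y z -> J1 x y z = J2 x y z.
Proof.
move=> H1 H2 x y z.
suff: forall n x y z, (ivl x y + ivl y z < n)%N -> R x y -> R y z ->
   J1 x y z = J2 x y z by apply; exact: ltnSn.
elim=> [//|n IH] {}x {}y {}z hn hxy hyz.
have E : \sum_(a | R x a && R a y) \sum_(b | R y b && R b z) J1 a y b =
         \sum_(a | R x a && R a y) \sum_(b | R y b && R b z) J2 a y b.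
  by rewrite H1 // H2.
move: E.
rewrite [X in X = _](bigD1 x) /=; last by rewrite R_refl hxy.
rewrite [X in _ = X](bigD1 x) /=; last by rewrite R_refl hxy.
rewrite [X in X + _ = _](bigD1 z) /=; last by rewrite R_refl hyz.
rewrite [X in _ = X + _](bigD1 z) /=; last by rewrite R_refl hyz.
have -> : \sum_(b | R y b && R b z && (b != z)) J1 x y b =
          \sum_(b | R y b && R b z && (b != z)) J2 x y b.
  apply: eq_bigr => b /andP[/andP[h1 h2] h3]; apply: IH => //.
  have := ivl_right_lt h1 h2 h3; lia.
have -> : \sum_(a | R x a && R a y && (a != x)) \sum_(b | R y b && R b z) J1 a y b =
          \sum_(a | R x a && R a y && (a != x)) \sum_(b | R y b && R b z) J2 a y b.
  apply: eq_bigr => a /andP[/andP[h1 h2] h3]; apply: eq_bigr => b /andP[h4 h5].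
  apply: IH => //.
  have := ivl_left_lt h1 h2 h3; have := @ivl_right_le y b z h5; lia.
by move/addIr/addIr.
Qed.

End Gen.

Lemma flip_poset (T : finType) (R : rel T) : is_poset R -> is_poset (fun u v => R v u).
Proof.
move=> pos; split.
- move=> x; exact: R_refl.
- move=> x y /andP[h1 h2]; exact: R_anti h2 h1.
- move=> x y z h1 h2; exact: R_trans h2 h1.
Qed.

Lemma J_exists (T : finType) (R : rel T) : is_poset R -> is_J R (J_fun R).
Proof.
move=> pos; apply: epsilon_spec.
exists (fun a y b => mu (fun u v => R v u) y a * mu R y b).
move=> x y z hxy hyz.
under eq_bigr => a _ do rewrite -big_distrr.
rewrite -big_distrl /=.
rewrite (eq_bigl (fun a => R a y && R x a)); last by move=> a; rewrite andbC.
rewrite (@mu_sum _ (fun u v => R v u) (flip_poset pos) y x hxy).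
rewrite (mu_sum pos hyz) /delta3 [y == x]eq_sym.
by case: (x == y); case: (y == z).
Qed.

Lemma sum_pairM (R : ringType) (P Q : finType) (p : pred P) (q : pred Q)
  (A : P -> R) (B : Q -> R) :
  \sum_(u : P * Q | p u.1 && q u.2) A u.1 * B u.2 =
  (\sum_(x | p x) A x) * (\sum_(y | q y) B y).
Proof. by rewrite big_distrlr pair_big. Qed.

Section Prod.
Variables (P Q : finType) (leP : rel P) (leQ : rel Q).
Hypotheses (posP : is_poset leP) (posQ : is_poset leQ).

Lemma prod_poset : is_poset (prod_le leP leQ).
Proof.
split.
- by move=> u; rewrite /prod_le (R_refl posP) (R_refl posQ).
- move=> [u1 u2] [v1 v2]; rewrite /prod_le /= => /andP[/andP[h1 h2] /andP[h3 h4]].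
  by rewrite (R_anti posP h1 h3) (R_anti posQ h2 h4).
- move=> v u w; rewrite /prod_le => /andP[h1 h2] /andP[h3 h4].
  by rewrite (R_trans posP h1 h3) (R_trans posQ h2 h4).
Qed.

Lemma prod_isJ : is_J (prod_le leP leQ)
  (fun u v w => J_fun leP u.1 v.1 w.1 * J_fun leQ u.2 v.2 w.2).
Proof.
move=> x y z /andP[hx1 hx2] /andP[hy1 hy2].
have cond : forall (x y : P * Q),
   (fun a => prod_le leP leQ x a && prod_le leP leQ a y) =1
   (fun a => (leP x.1 a.1 && leP a.1 y.1) && (leQ x.2 a.2 && leQ a.2 y.2)).
  move=> x' y' a; rewrite /prod_le.
  by case: (leP x'.1 a.1); case: (leP a.1 y'.1); case: (leQ x'.2 a.2); case: (leQ a.2 y'.2).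
rewrite (eq_bigl _ _ (cond x y)).
under eq_bigr => a _ do rewrite (eq_bigl _ _ (cond y z))
  (sum_pairM (fun b1 => leP y.1 b1 && leP b1 z.1) (fun b2 => leQ y.2 b2 && leQ b2 z.2)
     (fun b1 => J_fun leP a.1 y.1 b1) (fun b2 => J_fun leQ a.2 y.2 b2)).
rewrite (sum_pairM (fun a1 => leP x.1 a1 && leP a1 y.1) (fun a2 => leQ x.2 a2 && leQ a2 y.2) (fun a1 => \sum_(b1 | leP y.1 b1 && leP b1 z.1) J_fun leP a1 y.1 b1)
                   (fun a2 => \sum_(b2 | leQ y.2 b2 && leQ b2 z.2) J_fun leQ a2 y.2 b2)).
rewrite !J_exists //.
case: x y z {hx1 hx2 hy1 hy2} => [x1 x2] [y1 y2] [z1 z2].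
rewrite /delta3 /= !xpair_eqE.
by case: (x1 == y1); case: (x2 == y2); case: (y1 == z1); case: (y2 == z2).
Qed.

End Prod.

Lemma sum_pairT (R : ringType) (P Q : finType) (A : P -> R) (B : Q -> R) :
  \sum_(u : P * Q) A u.1 * B u.2 = (\sum_x A x) * (\sum_y B y).
Proof. by rewrite big_distrlr pair_big. Qed.

Lemma rk_le (T : finType) (rk : T -> nat) x : (rk x <= rank_of rk)%N.
Proof. exact: leq_bigmax. Qed.

Lemma rank_prod (P Q : finType) (rkP : P -> nat) (rkQ : Q -> nat) (x0 : P) (y0 : Q) :
  rank_of (prod_rk rkP rkQ) = (rank_of rkP + rank_of rkQ)%N.
Proof.
apply/eqP; rewrite eqn_leq; apply/andP; split.
  apply/bigmax_leqP => u _; rewrite /prod_rk leq_add //; exact: rk_le.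
rewrite /rank_of (bigmax_eq_arg x0) // (bigmax_eq_arg y0) //.
exact: (@leq_bigmax _ (prod_rk rkP rkQ) ([arg max_(i > x0) rkP i], [arg max_(i > y0) rkQ i])).
Qed.

Lemma Mpoly_cond (T : finType) (le : rel T) (rk : T -> nat) :
  Mpoly le rk = \sum_x \sum_y \sum_z
    (if le x y && le y z then J_fun le x y z *: 'X^(rho rk x y z) else 0).
Proof.
rewrite /Mpoly; apply: eq_bigr => x _; apply: eq_bigr => y _; exact: big_mkcond.
Qed.

Theorem proposition6p6 (P Q : finType) (leP : rel P) (leQ : rel Q)
    (rkP : P -> nat) (rkQ : Q -> nat) :
  ranked_poset leP rkP -> ranked_poset leQ rkQ ->
  Mpoly (prod_le leP leQ) (prod_rk rkP rkQ) = Mpoly leP rkP * Mpoly leQ rkQ.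
Proof.
move=> [posP _ _] [posQ _ _].
have posPQ := prod_poset posP posQ.
have hJ := J_unique posPQ (J_exists posPQ) (prod_isJ posP posQ).
rewrite !Mpoly_cond.
set FP := fun x y z => if leP x y && leP y z then J_fun leP x y z *: 'X^(rho rkP x y z) else 0.
set FQ := fun x y z => if leQ x y && leQ y z then J_fun leQ x y z *: 'X^(rho rkQ x y z) else 0.
have pt : forall u v w,
  (if prod_le leP leQ u v && prod_le leP leQ v w then
     J_fun (prod_le leP leQ) u v w *: 'X^(rho (prod_rk rkP rkQ) u v w) else 0)
  = FP u.1 v.1 w.1 * FQ u.2 v.2 w.2.
  move=> [u1 u2] [v1 v2] [w1 w2]; rewrite /FP /FQ /=.
  have hc : prod_le leP leQ (u1, u2) (v1, v2) && prod_le leP leQ (v1, v2) (w1, w2) =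
    (leP u1 v1 && leP v1 w1) && (leQ u2 v2 && leQ v2 w2).
    rewrite /prod_le /=.
    by case: (leP u1 v1); case: (leP v1 w1); case: (leQ u2 v2); case: (leQ v2 w2).
  rewrite hc; case hp: (leP u1 v1 && leP v1 w1); case hq: (leQ u2 v2 && leQ v2 w2);
    rewrite ?mul0r ?mulr0 //=.
  move/andP: hp => [hp1 hp2]; move/andP: hq => [hq1 hq2].
  rewrite hJ /prod_le /= ?hp1 ?hp2 ?hq1 ?hq2 //.
  have -> : rho (prod_rk rkP rkQ) (u1, u2) (v1, v2) (w1, w2) =
            (rho rkP u1 v1 w1 + rho rkQ u2 v2 w2)%N.
    rewrite /rho (rank_prod rkP rkQ u1 u2) /prod_rk /=.
    have := rk_le rkP u1; have := rk_le rkP v1; have := rk_le rkP w1.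
    have := rk_le rkQ u2; have := rk_le rkQ v2; have := rk_le rkQ w2.
    lia.
  by rewrite exprD -scalerAl -scalerAr scalerA.
under eq_bigr => u _ do under eq_bigr => v _ do
  (rewrite (eq_bigr _ (fun w _ => pt u v w)) (sum_pairT (fun w1 => FP u.1 v.1 w1) (fun w2 => FQ u.2 v.2 w2))).
under eq_bigr => u _ do rewrite (sum_pairT (fun v1 => \sum_w1 FP u.1 v1 w1) (fun v2 => \sum_w2 FQ u.2 v2 w2)).
by rewrite (sum_pairT (fun u1 => \sum_v1 \sum_w1 FP u1 v1 w1) (fun u2 => \sum_v2 \sum_w2 FQ u2 v2 w2)).
Qed.
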